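(* For any $p>\sqrt{1/2}$ there is $c=c(p)<\infty$ and an oracle routing algorithm between the two roots of $TT_n$ in $TT_{n,p}$ whose average (expected) routing complexity is at most $cn$.
   Context: The double binary tree $TT_n$ is obtained by taking two complete binary trees of uniform depth $n$ and identifying their corresponding leaves; its roots are the roots of the two trees. $TT_{n,p}$ is the random subgraph in which each edge is open independently with probability $p$. An oracle routing algorithm may probe whether any edge of the graph is open (no locality restriction) and outputs an open path between the two given vertices if one exists. Its routing complexity is the number of probes made until a path is found, conditioned on the event that the two vertices are connected by an open path. *)

(* Defs.v *)
From mathcomp Require Import all_boot all_order all_algebra.
From mathcomp Require Import boolp.
Set Implicit Arguments. Unset Strict Implicit. Unset Printing Implicit Defensive.
Import Order.TTheory GRing.Theory Num.Theory.

(* ---------- The double binary tree TT_n ----------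
   A node of a complete binary tree of depth n is (k, i) with k <= n the depth
   and i < 2^k its index at that depth (children of (k,i) are (k+1,2i),(k+1,2i+1)).
   A vertex of TT_n is (b, k, i) with b : bool naming which of the two trees;
   the leaves (depth n) of the two trees are identified, which we implement by
   the canonicalisation [vtx]. *)

Definition vertex := (bool * nat * nat)%type.

Definition vtx (n : nat) (v : vertex) : vertex :=
  if v.1.2 == n then (true, v.1.2, v.2) else v.

Definition root1 (n : nat) : vertex := vtx n (true, 0, 0).
Definition root2 (n : nat) : vertex := vtx n (false, 0, 0).

(* Edges: edge (b,k,i) with 1 <= k <= n, i < 2^k joins node (k,i) of tree b
   to its parent (k-1, i/2). *)
Definition is_edge (n : nat) (x : bool * 'I_n.+1 * 'I_(2 ^ n)) : bool :=
  (0 < x.1.2) && (x.2 < 2 ^ x.1.2).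

Definition edge (n : nat) := {x : bool * 'I_n.+1 * 'I_(2 ^ n) | is_edge x}.

Definition ends (n : nat) (e : edge n) : vertex * vertex :=
  let x := val e in
  (vtx n (x.1.1, (x.1.2 : nat).-1, (x.2 : nat) %/ 2),
   vtx n (x.1.1, (x.1.2 : nat), (x.2 : nat))).

Definition adj (n : nat) (S : pred (edge n)) : rel vertex :=
  fun u v => [exists e : edge n, S e && ((ends e == (u, v)) || (ends e == (v, u)))].

Definition roots_connected (n : nat) (S : pred (edge n)) : Prop :=
  exists s : seq vertex, path (adj S) (root1 n) s && (last (root1 n) s == root2 n).

Definition config (n : nat) := {ffun edge n -> bool}.

Definition prob {R : numDomainType} (p : R) (n : nat) (w : config n) : R :=
  \prod_(e : edge n) (if w e then p else 1 - p).

Definition open_conn (n : nat) (w : config n) : Prop :=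
  roots_connected (fun e => w e).

(* ---------- Oracle routing algorithms ----------
   A deterministic adaptive algorithm: given the history of probes (edge probed,
   answer open/closed), either probes a further edge (Some e) or stops (None).
   Any edge of the graph may be probed (no locality restriction). *)
Definition strategy (n : nat) := seq (edge n * bool) -> option (edge n).

Fixpoint history (n : nat) (A : strategy n) (w : config n) (t : nat)
  : seq (edge n * bool) :=
  match t with
  | 0 => [::]
  | t'.+1 =>
      let h := history A w t' in
      match A h with
      | Some e => rcons h (e, w e)
      | None => h
      end
  end.

Definition revealed_open (n : nat) (h : seq (edge n * bool)) : pred (edge n) :=
  fun e => (e, true) \in h.

Definition routes_in (n : nat) (A : strategy n) (w : config n) (T : nat) : Prop :=
  [/\ forall t, t < T -> A (history A w t) <> None,
      A (history A w T) = None &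
      roots_connected (revealed_open (history A w T))].

(* Main.v *)
Require Import Defs.
From mathcomp Require Import all_boot all_order all_algebra.
From mathcomp Require Import boolp.
From mathcomp Require Import zify.
From mathcomp.algebra_tactics Require Import ring lra.
Import Order.TTheory GRing.Theory Num.Theory.
Set Implicit Arguments. Unset Strict Implicit. Unset Printing Implicit Defensive.

Section Comb.
Variable n : nat.

Definition ek (e : edge n) : nat := (val e).1.2.
Definition ei (e : edge n) : nat := (val e).2.
Definition eb (e : edge n) : bool := (val e).1.1.

Definition mkedge (x : bool * nat * nat) : option (edge n) :=
  if (insub x.1.2 : option 'I_n.+1) is Some k then
  if (insub x.2 : option 'I_(2^n)) is Some i then insub (x.1.1, k, i) else None
  else None.

Lemma mkedge_val e : mkedge (eb e, ek e, ei e) = Some e.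
Proof.
case: e => [[[b k] i] h]; rewrite /mkedge /eb /ek /ei /= !valK.
by rewrite insubT.
Qed.

Lemma mkedgeP x e : mkedge x = Some e -> x = (eb e, ek e, ei e).
Proof.
case: x => [[b k] i]; rewrite /mkedge /=.
case: insubP => // k' _ <-; case: insubP => // i' _ <-.
by case: insubP => // u _ hu [<-]; rewrite /eb /ek /ei hu.
Qed.

Lemma edge_bounds e : 0 < ek e <= n /\ ei e < 2 ^ ek e.
Proof.
case: e => [[[b k] i] hh]; rewrite /ek /ei /=; move: hh => /andP[/= h1 h2].
by rewrite h1 h2 -ltnS ltn_ord.
Qed.

Lemma mkedge_ex b k i : 0 < k <= n -> i < 2 ^ k -> exists e, mkedge (b, k, i) = Some e.
Proof.
move=> /andP[k0 kn] ik.
have hk : k < n.+1 by lia.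
have hi : i < 2 ^ n by apply: (leq_trans ik); rewrite leq_pexp2l.
rewrite /mkedge /= (insubT (fun k => k < n.+1) hk) (insubT (fun i => i < 2 ^ n) hi) /=.
have he : is_edge (b, Ordinal hk, Ordinal hi) by rewrite /is_edge /= k0 ik.
by rewrite (insubT _ he); eexists.
Qed.

Definition ew (W : edge n -> bool) x := if mkedge x is Some e then W e else false.

Lemma ew_val W e : ew W (eb e, ek e, ei e) = W e.
Proof. by rewrite /ew mkedge_val. Qed.

Inductive dtree := Leaf of bool | Node of edge n & dtree & dtree.

Fixpoint run (W : edge n -> bool) t : seq (edge n) :=
  match t with Leaf _ => [::] | Node e t0 t1 => e :: run W (if W e then t1 else t0) end.
Fixpoint res (W : edge n -> bool) t : bool :=
  match t with Leaf b => b | Node e t0 t1 => res W (if W e then t1 else t0) end.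
Fixpoint bind t (k : bool -> dtree) :=
  match t with Leaf b => k b | Node e t0 t1 => Node e (bind t0 k) (bind t1 k) end.

Lemma run_bind W t k : run W (bind t k) = run W t ++ run W (k (res W t)).
Proof. by elim: t => //= e t0 IH0 t1 IH1; case: (W e); rewrite /= ?IH0 ?IH1. Qed.
Lemma res_bind W t k : res W (bind t k) = res W (k (res W t)).
Proof. by elim: t => //= e t0 IH0 t1 IH1; case: (W e); rewrite /= ?IH0 ?IH1. Qed.

Definition qnode x t0 t1 := if mkedge x is Some e then Node e t0 t1 else t0.
Definition chtree k j sub :=
  qnode (true, k, j) (Leaf false) (qnode (false, k, j) (Leaf false) sub).

Fixpoint dfst h k i :=
  match h with
  | 0 => Leaf true
  | h'.+1 => bind (chtree k.+1 (2 * i) (dfst h' k.+1 (2 * i)))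
       (fun r => if r then Leaf true else chtree k.+1 (2 * i).+1 (dfst h' k.+1 (2 * i).+1))
  end.

Lemma res_qnode W x t0 t1 : res W (qnode x t0 t1) = res W (if ew W x then t1 else t0).
Proof. by rewrite /qnode /ew; case: mkedge. Qed.

Lemma res_chtree W k j sub :
  res W (chtree k j sub) = [&& ew W (true, k, j), ew W (false, k, j) & res W sub].
Proof. by rewrite /chtree !res_qnode; case: (ew W (true, k, j)); rewrite //= res_qnode; case: ew. Qed.

Lemma run_chtree W k j sub e1 e2 : mkedge (true, k, j) = Some e1 -> mkedge (false, k, j) = Some e2 ->
  run W (chtree k j sub) = e1 :: (if W e1 then e2 :: (if W e2 then run W sub else [::]) else [::]).
Proof. by rewrite /chtree /qnode => -> -> /=; case: (W e1) => //=; case: (W e2). Qed.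

Lemma run_prefix W W' t m : (forall e, e \in take m (run W t) -> W e = W' e) ->
  take m.+1 (run W' t) = take m.+1 (run W t).
Proof.
elim: t m => //= e t0 IH0 t1 IH1 [|m] h; first by rewrite /= !take0.
have -> : W' e = W e by rewrite h //= inE eqxx.
congr (_ :: _); case: (W e) in h *.
  by apply: IH1 => x hx; apply: h; rewrite /= inE hx orbT.
by apply: IH0 => x hx; apply: h; rewrite /= inE hx orbT.
Qed.

Lemma onth_take (T : Type) (s : seq T) k m : m < k -> onth (take k s) m = onth s m.
Proof. by elim: s k m => [|x s IH] [|k] [|m] //= h; rewrite IH. Qed.

Lemma onth_rcons (T : Type) (s : seq T) m x : onth s m = Some x -> take m.+1 s = rcons (take m s) x.
Proof. by elim: s m => [|y s IH] [|m] //= => [[->]|h]; rewrite ?take0 // IH. Qed.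

Definition strat (t : dtree) : strategy n :=
  fun h => onth (run (revealed_open h) t) (size h).

Lemma hist_eq (w : config n) t m : m <= size (run w t) ->
  history (strat t) w m = [seq (e, w e) | e <- take m (run w t)].
Proof.
elim: m => [|m IH] hm /=; first by rewrite take0.
rewrite IH ?(ltnW hm) //.
set L := run w t.
set h := [seq (e, w e) | e <- take m L].
have agree : forall e, e \in take m L -> w e = revealed_open h e.
  move=> e he; rewrite /revealed_open /h; case we: (w e).
    by apply/esym/mapP; exists e => //; rewrite we.
  by apply/esym/negbTE/negP => /mapP [e' _ [ee' he']]; move: we; rewrite ee' -he'.
have hp := run_prefix agree.
have sz : size h = m by rewrite size_map size_take; case: ltnP hm => //; lia.
have [x hx] : exists x, onth L m = Some x.
  by case: (onth L m) (onthTE L m) => [x|]; [exists x | rewrite hm].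
rewrite /strat sz -(onth_take _ (ltnSn m)) hp (onth_take _ (ltnSn m)) hx.
by rewrite (onth_rcons hx) map_rcons.
Qed.

Lemma strat_stop (w : config n) t :
  strat t (history (strat t) w (size (run w t))) = None.
Proof.
rewrite hist_eq // take_size.
set L := run w t.
set h := [seq (e, w e) | e <- L].
have agree : forall e, e \in take (size L) L -> w e = revealed_open h e.
  rewrite take_size => e he; rewrite /revealed_open /h; case we: (w e).
    by apply/esym/mapP; exists e => //; rewrite we.
  by apply/esym/negbTE/negP => /mapP [e' _ [ee' he']]; move: we; rewrite ee' -he'.
have hp := run_prefix agree.
rewrite /strat size_map -(onth_take _ (ltnSn _)) hp (onth_take _ (ltnSn _)).
by rewrite onth_default.
Qed.

Lemma strat_go (w : config n) t m : m < size (run w t) ->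
  strat t (history (strat t) w m) <> None.
Proof.
move=> hm; rewrite hist_eq ?(ltnW hm) //.
set L := run w t.
set h := [seq (e, w e) | e <- take m L].
have agree : forall e, e \in take m L -> w e = revealed_open h e.
  move=> e he; rewrite /revealed_open /h; case we: (w e).
    by apply/esym/mapP; exists e => //; rewrite we.
  by apply/esym/negbTE/negP => /mapP [e' _ [ee' he']]; move: we; rewrite ee' -he'.
have hp := run_prefix agree.
have sz : size h = m by rewrite size_map size_take; case: ltnP hm => //; lia.
rewrite /strat sz -(onth_take _ (ltnSn m)) hp (onth_take _ (ltnSn m)).
by case: (onth L m) (onthTE L m) => //; rewrite hm.
Qed.

Lemma revealed_final (w : config n) t e :
  revealed_open (history (strat t) w (size (run w t))) e = (e \in run w t) && w e.
Proof.
rewrite hist_eq // take_size /revealed_open.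
apply/mapP/andP => [[e' he' [ee' we']] | [he we]]; first by rewrite ee' -we'; split.
by exists e => //; rewrite we.
Qed.

End Comb.

Section Conn.
Variable n : nat.

Definition reach (S : pred (edge n)) u v :=
  exists s, path (adj S) u s && (last u s == v).

Lemma reach_refl S u : reach S u u.
Proof. by exists [::]; rewrite /= eqxx. Qed.

Lemma reach_trans S u v x : reach S u v -> reach S v x -> reach S u x.
Proof.
move=> [s1 /andP[p1 /eqP l1]] [s2 /andP[p2 l2]]; exists (s1 ++ s2).
by rewrite cat_path last_cat p1 l1 p2.
Qed.

Lemma reach_adj S u v : adj S u v -> reach S u v.
Proof. by move=> h; exists [:: v]; rewrite /= h eqxx. Qed.

Lemma adj_mono (S S' : pred (edge n)) : (forall e, S e -> S' e) -> forall u v, adj S u v -> adj S' u v.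
Proof.
move=> hS u v /existsP [e /andP [se he]]; apply/existsP; exists e.
by rewrite hS.
Qed.

Lemma reach_mono (S S' : pred (edge n)) u v : (forall e, S e -> S' e) -> reach S u v -> reach S' u v.
Proof.
move=> hS [s /andP[p l]]; exists s; rewrite l andbT.
by apply: sub_path p => x y; apply: adj_mono.
Qed.

Lemma adj_edge (S : pred (edge n)) e : S e -> adj S (ends e).1 (ends e).2.
Proof.
move=> se; apply/existsP; exists e; rewrite se.
by case: (ends e) => a b; rewrite /= eqxx.
Qed.

Lemma adj_sym (S : pred (edge n)) u v : adj S u v -> adj S v u.
Proof.
move=> /existsP [e /andP [se he]]; apply/existsP; exists e.
by rewrite se orbC.
Qed.

Lemma endsE (e : edge n) : ends e = (vtx n (eb e, (ek e).-1, ei e %/ 2), vtx n (eb e, ek e, ei e)).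
Proof. by []. Qed.

Lemma mkedge_ends b k j e : mkedge n (b, k, j) = Some e ->
  ends e = (vtx n (b, k.-1, j %/ 2), vtx n (b, k, j)).
Proof. by move=> /mkedgeP [-> -> ->]. Qed.

Lemma ew_some (W : pred (edge n)) x e : mkedge n x = Some e -> ew W x = W e.
Proof. by rewrite /ew => ->. Qed.

Lemma child_conn (W : pred (edge n)) h k i j : k.+1 + h = n -> j %/ 2 = i -> j < 2 ^ k.+1 ->
  res W (chtree k.+1 j (dfst n h k.+1 j)) ->
  (res W (dfst n h k.+1 j) -> reach (fun e => (e \in run W (dfst n h k.+1 j)) && W e)
        (vtx n (true, k.+1, j)) (vtx n (false, k.+1, j))) ->
  reach (fun e => (e \in run W (chtree k.+1 j (dfst n h k.+1 j))) && W e)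
     (vtx n (true, k, i)) (vtx n (false, k, i)).
Proof.
move=> hkh hj hjk hr IH.
have hk : 0 < k.+1 <= n by lia.
have [e1 he1] := mkedge_ex true hk hjk.
have [e2 he2] := mkedge_ex false hk hjk.
move: hr; rewrite res_chtree (ew_some _ he1) (ew_some _ he2) => /and3P [w1 w2 rs].
rewrite (run_chtree _ _ he1 he2) w1 w2.
apply: (@reach_trans _ _ (vtx n (true, k.+1, j))).
  apply: reach_adj.
  have := adj_edge (S := fun e => (e \in [:: e1, e2 & run W (dfst n h k.+1 j)]) && W e) (e := e1).
  by rewrite (mkedge_ends he1) /= hj inE eqxx w1; apply.
apply: (@reach_trans _ _ (vtx n (false, k.+1, j))).
  apply: reach_mono (IH rs) => e /andP [he we].
  by rewrite !inE he we !orbT.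
apply: reach_adj; apply: adj_sym.
have := adj_edge (S := fun e => (e \in [:: e1, e2 & run W (dfst n h k.+1 j)]) && W e) (e := e2).
by rewrite (mkedge_ends he2) /= hj !inE eqxx orbT w2; apply.
Qed.

Lemma dfs_conn (W : pred (edge n)) h k i : k + h = n -> i < 2 ^ k -> res W (dfst n h k i) ->
  reach (fun e => (e \in run W (dfst n h k i)) && W e) (vtx n (true, k, i)) (vtx n (false, k, i)).
Proof.
elim: h k i => [|h IH] k i hkh hi.
  by move=> _; rewrite addn0 in hkh; rewrite /vtx /= hkh eqxx; apply: reach_refl.
rewrite /= res_bind run_bind.
have hkh' : k.+1 + h = n by lia.
have hi1 : 2 * i < 2 ^ k.+1 by rewrite expnS; lia.
have hi2 : (2 * i).+1 < 2 ^ k.+1 by rewrite expnS; lia.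
have d1 : (2 * i) %/ 2 = i by lia.
have d2 : (2 * i).+1 %/ 2 = i by lia.
case r1: (res W (chtree k.+1 (2 * i) (dfst n h k.+1 (2 * i)))) => hr.
  apply: reach_mono (child_conn hkh' d1 hi1 r1 (IH _ _ hkh' hi1)) => e /andP [he we].
  by rewrite mem_cat he we.
apply: reach_mono (child_conn hkh' d2 hi2 hr (IH _ _ hkh' hi2)) => e /andP [he we].
by rewrite mem_cat he we orbT.
Qed.

Lemma res_conn (W : pred (edge n)) : res W (dfst n n 0 0) -> roots_connected W.
Proof.
move=> hr; have := dfs_conn (W := W) (h := n) (k := 0) (i := 0) (erefl _) (erefl _) hr.
by apply: reach_mono => e /andP [].
Qed.

Definition good (W : pred (edge n)) k i := ew W (true, k, i) && ew W (false, k, i).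

Fixpoint st (W : pred (edge n)) k i : bool * bool :=
  match k with
  | 0 => (true, false)
  | k'.+1 => let s := st W k' (i %/ 2) in
      if good W k'.+1 i then s else if ew W (true, k'.+1, i) then (s.1, s.1) else (s.2, s.2)
  end.

Fixpoint ag (W : pred (edge n)) k i : bool :=
  match k with 0 => true | k'.+1 => good W k'.+1 i && ag W k' (i %/ 2) end.

Lemma st_ag W k i : (ag W k i -> st W k i = (true, false)) /\ (~~ ag W k i -> (st W k i).1 = (st W k i).2).
Proof.
elim: k i => [|k IH] i //=.
have [IH1 IH2] := IH (i %/ 2).
case: (good W k.+1 i) => /=; first by split.
by split => // _; case: ew.
Qed.

Lemma ag_anc W k m l : ag W (k + m) l -> ag W k (l %/ 2 ^ m).
Proof.
elim: m l => [|m IH] l; first by rewrite addn0 expn0 divn1.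
rewrite addnS /= => /andP [_ h]; have := IH _ h.
by rewrite -divnMA -expnS.
Qed.

Lemma ag_res W h k i l : k + h = n -> l %/ 2 ^ h = i -> ag W (k + h) l -> res W (dfst n h k i).
Proof.
elim: h k i => [|h IH] k i //= hkh hl ha.
rewrite res_bind.
set j := l %/ 2 ^ h.
have hkh' : k.+1 + h = n by lia.
rewrite addnS -addSn in ha.
have hj : ag W k.+1 j := ag_anc ha.
move: hj => /= /andP [gj _].
have rj := IH k.+1 j hkh' erefl ha.
have jj : j %/ 2 = i by rewrite /j -divnMA -expnSr.
have := divn_eq j 2; rewrite jj.
have : j %% 2 < 2 by rewrite ltn_mod.
case: (j %% 2) => [|[|//]] _ ej; move: gj rj; rewrite ej ?addn0 ?addn1 mulnC /good => /andP [g1 g2] rj.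
  by rewrite res_chtree g1 g2 rj.
rewrite res_chtree; case: ifP => // _ /=.
by rewrite res_chtree g1 g2 rj.
Qed.

Definition side (W : pred (edge n)) (v : vertex) := if v.1.1 then (st W v.1.2 v.2).1 else (st W v.1.2 v.2).2.

Lemma side_edge (W : pred (edge n)) (e : edge n) : W e -> ~~ res W (dfst n n 0 0) -> side W (ends e).1 = side W (ends e).2.
Proof.
move=> we hr.
have [/andP [k0 kn] hi] := edge_bounds e.
rewrite endsE.
have -> : vtx n (eb e, (ek e).-1, ei e %/ 2) = (eb e, (ek e).-1, ei e %/ 2).
  by rewrite /vtx /=; case: eqP => //; lia.
have -> : side W (vtx n (eb e, ek e, ei e)) = side W (eb e, ek e, ei e).
  rewrite /vtx /=; case: eqP => // hkn.
  have nag : ~~ ag W (ek e) (ei e).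
    apply/negP => ha; move/negP: hr; apply.
    apply: (ag_res (k := 0) (l := ei e)) => //.
      by rewrite divn_small //; move: hi; rewrite hkn.
    by rewrite add0n; move: ha; rewrite hkn.
  have [_ h2] := st_ag W (ek e) (ei e).
  by rewrite /side /= (h2 nag); case: (eb e).
have ew1 := ew_val W e; rewrite we in ew1.
move: ew1; rewrite /side /=.
case: (ek e) k0 => [//|k] _ /=.
rewrite /good.
by case: (eb e) => ->; case: ew.
Qed.

Lemma path_side (W : pred (edge n)) s u : ~~ res W (dfst n n 0 0) -> path (adj W) u s -> side W (last u s) = side W u.
Proof.
move=> hr; elim: s u => [|v s IH] u //= /andP [a p].
rewrite IH //.
move: a => /existsP [e /andP [we /orP [] /eqP he]].
  by have := side_edge we hr; rewrite he.
by have := side_edge we hr; rewrite he.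
Qed.

Lemma conn_res (W : pred (edge n)) : roots_connected W -> res W (dfst n n 0 0).
Proof.
case: (posnP n) => [n0|npos].
  by move=> _; rewrite [X in dfst _ X]n0.
move=> [s /andP [p /eqP l]]; apply/negP => hr.
have hr' : ~~ res W (dfst n n 0 0) by apply/negP.
have := path_side hr' p.
rewrite l /Defs.root1 /Defs.root2 /vtx /= /side.
by case: eqP => //; lia.
Qed.

End Conn.

Section Prob.
Local Open Scope ring_scope.
Variable n : nat.
Variable R : realFieldType.
Variable p : R.
Hypothesis hp0 : 0 <= p.
Hypothesis hp1 : p <= 1.

Definition E (f : config n -> R) := \sum_(w : config n) prob p w * f w.

Definition setc (e : edge n) (b : bool) (w : config n) : config n :=
  [ffun x => if x == e then b else w x].

Definition dep (T : Type) (f : config n -> T) (D : pred (edge n)) :=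
  forall w w' : config n, (forall e, D e -> w e = w' e) -> f w = f w'.

Lemma dep_sub T (f : config n -> T) (D D' : pred (edge n)) :
  dep f D -> (forall e, D e -> D' e) -> dep f D'.
Proof. by move=> h s w w' a; apply: h => e /s; apply: a. Qed.

Lemma prob_ge0 (w : config n) : 0 <= prob p w.
Proof. by apply: prodr_ge0 => e _; case: (w e) => //=; rewrite subr_ge0. Qed.

Lemma E_le f g : (forall w, f w <= g w) -> E f <= E g.
Proof. by move=> h; apply: ler_sum => w _; apply: ler_wpM2l; [apply: prob_ge0|]. Qed.

Lemma E_add f g : E (fun w => f w + g w) = E f + E g.
Proof. by rewrite /E -big_split /=; apply: eq_bigr => w _; rewrite mulrDr. Qed.

Lemma E_scale c f : E (fun w => c * f w) = c * E f.
Proof. by rewrite /E mulr_sumr; apply: eq_bigr => w _; rewrite mulrCA. Qed.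

Lemma E_ext f g : (forall w, f w = g w) -> E f = E g.
Proof. by move=> h; apply: eq_bigr => w _; rewrite h. Qed.

Lemma E_1 : E (fun _ => 1) = 1.
Proof.
rewrite /E.
have := bigA_distr_bigA (fun (e : edge n) (b : bool) => if b then p else 1 - p).
rewrite /= => h.
under eq_bigr do rewrite mulr1.
rewrite /prob -h.
by apply: big1 => e _; rewrite big_bool /=; ring.
Qed.

Lemma E_ge0 f : (forall w, 0 <= f w) -> 0 <= E f.
Proof. by move=> h; apply: sumr_ge0 => w _; apply: mulr_ge0; [apply: prob_ge0|]. Qed.

Lemma E_const c : E (fun _ => c) = c.
Proof. by rewrite -[c]mulr1 E_scale E_1 mulr1. Qed.

Section OneEdge.
Variable e : edge n.
Let F (x : edge n) (b : bool) : R := if b then p else 1 - p.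
Let P' (w : config n) := \prod_(x | x != e) F x (w x).
Let tg (w : config n) := setc e (~~ w e) w.

Lemma setcE b (w : config n) x : setc e b w x = if x == e then b else w x.
Proof. by rewrite ffunE. Qed.

Lemma tgK : involutive tg.
Proof.
move=> w; apply/ffunP => x; rewrite /tg !setcE eqxx.
by case: eqP => [->|]; rewrite ?negbK.
Qed.

Lemma probE (w : config n) : prob p w = F e (w e) * P' w.
Proof. by rewrite /prob (bigD1 e) //=. Qed.

Lemma P'_setc b (w : config n) : P' (setc e b w) = P' w.
Proof. by apply: eq_bigr => x hx; rewrite setcE (negbTE hx). Qed.

Lemma setc_id b (w : config n) : w e = b -> setc e b w = w.
Proof. by move=> h; apply/ffunP => x; rewrite setcE; case: eqP => // ->. Qed.

Lemma setc_setc b b' (w : config n) : setc e b (setc e b' w) = setc e b w.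
Proof. by apply/ffunP => x; rewrite !setcE; case: eqP. Qed.

Lemma L1 (g : config n -> R) : E g = \sum_(w : config n | w e) P' w * (p * g w + (1 - p) * g (tg w)).
Proof.
rewrite /E (bigID (fun w : config n => w e)) /=.
rewrite [X in _ + X](reindex_inj (can_inj tgK)) /=.
have h2 : \sum_(w : config n | ~~ tg w e) prob p (tg w) * g (tg w) =
          \sum_(w : config n | w e) (1 - p) * P' w * g (tg w).
  apply: eq_big => [w | w we]; first by rewrite /tg setcE eqxx negbK.
  have we' : w e by move: we; rewrite /tg setcE eqxx negbK.
  by rewrite probE /tg P'_setc setcE eqxx we' /F /=.
have h1 : \sum_(w : config n | w e) prob p w * g w = \sum_(w : config n | w e) p * P' w * g w.
  by apply: eq_bigr => w we; rewrite probE we /F.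
rewrite h1 h2 -big_split /=; apply: eq_bigr => w _; ring.
Qed.

Lemma E1 (f : config n -> R) : E f = p * E (fun w => f (setc e true w)) + (1 - p) * E (fun w => f (setc e false w)).
Proof.
rewrite !L1 !mulr_sumr -big_split /=; apply: eq_bigr => w we.
have t1 : setc e true w = w by apply: setc_id.
have t2 : tg w = setc e false w by rewrite /tg we.
rewrite t2 !setc_setc t1; ring.
Qed.

End OneEdge.

Lemma E_edge (e : edge n) : E (fun w => (w e)%:R) = p.
Proof.
rewrite (E1 e) (E_ext (g := fun _ => 1)); last by move=> w; rewrite setcE eqxx.
rewrite (E_ext (f := fun w => ((setc e false w) e)%:R) (g := fun _ => 0)); last first.
  by move=> w; rewrite setcE eqxx.
by rewrite E_1 E_const; ring.
Qed.

Lemma dep_const (f : config n -> R) : dep f pred0 -> forall w, f w = f [ffun => false].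
Proof. by move=> h w; apply: h. Qed.

Lemma indep_aux N : forall (D : pred (edge n)) (f g : config n -> R), (#|D| <= N)%N ->
  dep f D -> dep g (predC D) -> E (fun w => f w * g w) = E f * E g.
Proof.
elim: N => [|N IH] D f g hD hf hg.
  have D0 : forall e, D e = false.
    move=> e; have := card0_eq (A := D); rewrite (_ : #|D| = 0)%N; last by lia.
    by move=> /(_ erefl e); rewrite inE.
  have fc : forall w, f w = f [ffun => false] by move=> w; apply: hf => e; rewrite D0.
  rewrite (E_ext (g := fun w => f [ffun => false] * g w)); last by move=> w; rewrite fc.
  by rewrite E_scale (E_ext fc) E_const.
case: (posnP #|D|) => [D0|Dpos].
  by apply: (IH D) => //; rewrite D0.
have /card_gt0P [e De] := Dpos.
pose D' : pred (edge n) := fun x => (x != e) && D x.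
have cD : #|D| = (1 + #|D'|)%N.
  rewrite (cardD1 e) De; congr (_ + _)%N; apply: eq_card => x.
have De' : D e by [].
have gs : forall b w, g (setc e b w) = g w.
  move=> b w; apply: hg => x /= hx; rewrite setcE; case: eqP => // xe.
  by rewrite xe De' in hx.
have hf' : forall b, dep (fun w => f (setc e b w)) D'.
  move=> b w w' a; apply: hf => x Dx; rewrite !setcE; case: eqP => // /eqP xe.
  by apply: a; rewrite /D' xe Dx.
have hg' : dep g (predC D').
  by apply: (dep_sub hg) => x /= hx; rewrite /D' negb_and (negbTE hx) orbT.
rewrite (E1 e) (E1 e f).
rewrite (E_ext (f := fun w => f (setc e true w) * g (setc e true w)) (g := fun w => f (setc e true w) * g w)); last by move=> w; rewrite gs.
rewrite (E_ext (f := fun w => f (setc e false w) * g (setc e false w)) (g := fun w => f (setc e false w) * g w)); last by move=> w; rewrite gs.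
rewrite (IH D' _ _ _ (hf' true) hg') ?(IH D' _ _ _ (hf' false) hg'); try lia.
ring.
Qed.

Lemma indep (D : pred (edge n)) (f g : config n -> R) :
  dep f D -> dep g (predC D) -> E (fun w => f w * g w) = E f * E g.
Proof. exact: (@indep_aux #|D|). Qed.

End Prob.

Section Trees.
Variable n : nat.

Fixpoint tree_in (D : pred (edge n)) (t : dtree n) : bool :=
  match t with Leaf _ => true | Node e t0 t1 => [&& D e, tree_in D t0 & tree_in D t1] end.

Lemma tree_in_mono (D D' : pred (edge n)) t : (forall e, D e -> D' e) -> tree_in D t -> tree_in D' t.
Proof. by move=> h; elim: t => //= e t0 IH0 t1 IH1 /and3P [/h -> /IH0 -> /IH1 ->]. Qed.

Lemma tree_in_bind (D : pred (edge n)) t k : tree_in D t -> (forall b, tree_in D (k b)) -> tree_in D (bind t k).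
Proof. by move=> + hk; elim: t => //= e t0 IH0 t1 IH1 /and3P [-> /IH0 -> /IH1 ->]. Qed.

Lemma tree_in_agree (D : pred (edge n)) t (W W' : edge n -> bool) : tree_in D t ->
  (forall e, D e -> W e = W' e) -> res W t = res W' t /\ run W t = run W' t.
Proof.
move=> + a; elim: t => //= e t0 IH0 t1 IH1 /and3P [De h0 h1].
rewrite -(a e De); case: (W e); [have [-> ->] := IH1 h1 | have [-> ->] := IH0 h0]; by [].
Qed.

Lemma dep_tree_fun T (F : bool -> seq (edge n) -> T) (D : pred (edge n)) t :
  tree_in D t -> dep (fun w => F (res w t) (run w t)) D.
Proof. by move=> ht w w' a; have [-> ->] := tree_in_agree ht a. Qed.

Definition incl k j : pred (edge n) := fun e => (k <= ek e)%N && (ei e %/ 2 ^ (ek e - k) == j).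
Definition below k j : pred (edge n) := fun e => (k < ek e)%N && (ei e %/ 2 ^ (ek e - k) == j).

Lemma below_incl k j e : below k j e -> incl k j e.
Proof. by rewrite /below /incl => /andP [h ->]; rewrite ltnW. Qed.

Lemma incl_below k j e : incl k.+1 j e -> below k (j %/ 2) e.
Proof.
rewrite /below /incl => /andP [h1 /eqP h2]; apply/andP; split; first by [].
have -> : (ek e - k = (ek e - k.+1).+1)%N by lia.
by rewrite expnSr divnMA h2.
Qed.

Lemma incl_own b k j e : mkedge n (b, k, j) = Some e -> incl k j e.
Proof. by move=> /mkedgeP [_ hk hj]; rewrite /incl -hk -hj leqnn subnn expn0 divn1 eqxx. Qed.

Lemma tree_in_chtree k j sub : tree_in (below k j) sub -> tree_in (incl k j) (chtree k j sub).
Proof.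
move=> hs; rewrite /chtree /qnode.
case h1: (mkedge n (true, k, j)) => [e1|] //=.
case h2: (mkedge n (false, k, j)) => [e2|] //=; rewrite (incl_own h1) //=.
rewrite (incl_own h2) /=.
by apply: tree_in_mono hs => e; apply: below_incl.
Qed.

Lemma tree_in_dfst h k i : tree_in (below k i) (dfst n h k i).
Proof.
elim: h k i => [|h IH] k i //=.
have d1 : ((2 * i) %/ 2 = i)%N by lia.
have d2 : ((2 * i).+1 %/ 2 = i)%N by lia.
apply: tree_in_bind.
  apply: tree_in_mono (tree_in_chtree (IH _ _)) => e /incl_below.
  by rewrite d1.
case => //; apply: tree_in_mono (tree_in_chtree (IH _ _)) => e /incl_below.
by rewrite d2.
Qed.

End Trees.



Local Open Scope ring_scope.




Lemma node_arith (R : realFieldType) (d M K Bc h u1 u2 A1 A2 N1 N2 : R) :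
  0 <= d -> d <= 1 -> 0 <= M -> K = 2 * M + 4 -> 2 * M * d = Bc -> 0 <= h ->
  1 - d <= u1 -> u1 <= 1 -> 1 - d <= u2 -> u2 <= 1 ->
  A1 <= (2 + K * h) * u1 -> A2 <= (2 + K * h) * u2 -> N1 <= M -> N2 <= M ->
  [/\ 1 - d * d <= u1 + (1 - u1) * u2,
      A1 + N1 * u2 + (1 - u1) * A2 <= K * (h + 1) * (u1 + (1 - u1) * u2)
    & N1 * (1 - u2) + (1 - u1) * N2 <= Bc].
Proof.
move=> d0 d1 M0 hK hB h0 a1 b1 a2 b2 hA1 hA2 hN1 hN2.
have p1 : 0 <= (d - (1 - u1)) * (1 - u2) by apply: mulr_ge0; lra.
have p2 : 0 <= d * (d - (1 - u2)) by apply: mulr_ge0; lra.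
split; first by nra.
  have q1 : N1 * u2 <= M * u2 by apply: ler_wpM2r; lra.
  have q2 : (1 - u1) * A2 <= (1 - u1) * ((2 + K * h) * u2) by apply: ler_wpM2l; lra.
  have q3 : 0 <= u1 * (1 - u2) by apply: mulr_ge0; lra.
  have q4 : 0 <= M * (u1 * (1 - u2)) by apply: mulr_ge0; lra.
  have q5 : 0 <= M * u2 by apply: mulr_ge0; lra.
  rewrite hK in q2 *; nra.
have q1 : N1 * (1 - u2) <= M * (1 - u2) by apply: ler_wpM2r; lra.
have q2 : (1 - u1) * N2 <= (1 - u1) * M by apply: ler_wpM2l; lra.
have q3 : M * (1 - u2) <= M * d by apply: ler_wpM2l; lra.
have q4 : (1 - u1) * M <= d * M by apply: ler_wpM2r; lra.
nra.
Qed.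

Section Analysis.
Variable n : nat.
Variable R : realFieldType.
Variable p : R.
Hypothesis hp0 : 0 <= p.
Hypothesis hp1 : p <= 1.
Hypothesis hg : 1 / 2 < p * p.

Definition dd := (1 - p * p) / (p * p).
Definition BB := 4 * dd / (2 * (p * p) - 1).
Definition MM := 2 + p * p * BB.
Definition KK := 2 * MM + 4.

Lemma consts : (0 <= dd) /\ (dd < 1) /\ (p * p * dd = 1 - p * p) /\ (0 <= BB) /\ (2 * MM * dd = BB) /\ (0 <= MM).
Proof.
have h0 := hp0; have h1 := hp1; have h2 := hg.
have g0 : 0 < p * p by lra.
have g1 : p * p <= 1 by nra.
have gn : p * p != 0 by rewrite (gt_eqF g0).
have gd : p * p * dd = 1 - p * p by rewrite /dd mulrC divfK.
have d0 : 0 <= dd by rewrite /dd divr_ge0 //; lra.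
have b2 : 0 < 2 * (p * p) - 1 by lra.
have bn : 2 * (p * p) - 1 != 0 by rewrite (gt_eqF b2).
have bB : BB * (2 * (p * p) - 1) = 4 * dd by rewrite /BB divfK.
have B0 : 0 <= BB by rewrite /BB divr_ge0 //; lra.
have gdB : p * p * dd * BB = (1 - p * p) * BB by rewrite gd.
split; first by [].
split; first by nra.
split; first by [].
split; first by [].
split; first by rewrite /MM; nra.
rewrite /MM; apply: addr_ge0; [lra | apply: mulr_ge0; lra].
Qed.

Definition Inv (t : dtree n) (h : nat) :=
  [/\ 1 - dd * dd <= E p (fun w => (res w t)%:R),
      E p (fun w => (size (run w t))%:R * (res w t)%:R) <= KK * h%:R * E p (fun w => (res w t)%:R)
    & E p (fun w => (size (run w t))%:R * (1 - (res w t)%:R)) <= BB].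

Lemma E_bool_le1 (b : config n -> bool) : E p (fun w => (b w)%:R) <= 1.
Proof.
rewrite -[X in _ <= X](E_1 n p); apply: E_le => // w.
by case: (b w) => /=; lra.
Qed.

Lemma E_bool_ge0 (b : config n -> bool) : 0 <= E p (fun w => (b w)%:R).
Proof. by apply: E_ge0 => // w; case: (b w) => /=; lra. Qed.

Lemma child_bound h k j : (k.+1 + h = n)%N -> (j < 2 ^ k.+1)%N -> Inv (dfst n h k.+1 j) h ->
  let t := chtree k.+1 j (dfst n h k.+1 j) in
  let u := E p (fun w => (res w t)%:R) in
  [/\ 1 - dd <= u, u <= 1,
      E p (fun w => (size (run w t))%:R * (res w t)%:R) <= (2 + KK * h%:R) * u
    & E p (fun w => (size (run w t))%:R * (1 - (res w t)%:R)) <= MM].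
Proof.
move=> hkh hj [hs ha hb] t u.
have h0 := hp0; have h1 := hp1; have h2 := hg.
have [d0 [d1 [gd [B0 [MB M0]]]]] := consts.
have hk : (0 < k.+1 <= n)%N by lia.
have [e1 he1] := mkedge_ex (n := n) true hk hj.
have [e2 he2] := mkedge_ex (n := n) false hk hj.
set sub := dfst n h k.+1 j in hs ha hb *.
have eS : forall w : config n, res w t = [&& w e1, w e2 & res w sub].
  by move=> w; rewrite /t res_chtree (ew_some _ he1) (ew_some _ he2).
have eZ : forall w : config n, size (run w t) =
    (1 + (if w e1 then 1 + (if w e2 then size (run w sub) else 0) else 0))%N.
  by move=> w; rewrite /t (run_chtree _ _ he1 he2); case: (w e1); case: (w e2).
move: (mkedgeP he1) (mkedgeP he2) => [eb1 ek1 ei1] [eb2 ek2 ei2].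
have e12 : (e1 == e2) = false.
  by apply/negbTE/eqP => hh; move: eb1 eb2; rewrite hh => <-.
pose own : pred (edge n) := fun e => (e == e1) || (e == e2).
have dG : dep (fun w : config n => (w e1)%:R * (w e2)%:R : R) own.
  by move=> w w' a; rewrite !a // /own eqxx ?orbT.
have ob : forall e, below k.+1 j e -> predC own e.
  move=> e /andP [he _]; rewrite /= /own.
  by apply/norP; split; apply/negP => /eqP hh; move: he; rewrite hh -?ek1 -?ek2 ltnn.
have dsub : forall T (F : bool -> seq (edge n) -> T), dep (fun w => F (res w sub) (run w sub)) (predC own).
  move=> T F; apply: dep_sub (dep_tree_fun F (tree_in_dfst n h k.+1 j)) ob.
have EGv : E p (fun w => (w e1)%:R * (w e2)%:R) = p * p.
  rewrite (indep hp0 hp1 (D := fun e => e == e1)) ?E_edge //.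
    by move=> w w' a; rewrite a.
  by move=> w w' a; rewrite a //= eq_sym e12.
have EG : forall F : config n -> R, dep F (predC own) ->
    E p (fun w => (w e1)%:R * (w e2)%:R * F w) = p * p * E p F.
  by move=> F hF; rewrite (indep hp0 hp1 dG hF) EGv.
set sig := E p (fun w => (res w sub)%:R) in hs ha *.
have hu : u = p * p * sig.
  rewrite /u -EG; last by apply: (dsub _ (fun b _ => (b%:R : R))).
  by apply: E_ext => w; rewrite eS; case: (w e1); case: (w e2); rewrite /= ?mul1r ?mul0r.
have s1 : sig <= 1 by apply: E_bool_le1.
have s0 : 0 <= sig by apply: E_bool_ge0.
have g0 : 0 <= p * p by nra.
split.
- have q1 : 0 <= p * p * (sig - (1 - dd * dd)) by apply: mulr_ge0; lra.
  have q2 : p * p * dd * dd = (1 - p * p) * dd by rewrite gd.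
  rewrite hu; nra.
- have q1 : p * p * sig <= 1 * 1 by apply: ler_pM; nra.
  by rewrite hu; lra.
- rewrite (E_ext p (g := fun w => (w e1)%:R * (w e2)%:R *
       (2 * (res w sub)%:R + (size (run w sub))%:R * (res w sub)%:R))); last first.
    move=> w; rewrite eS eZ; case: (w e1); case: (w e2); case: (res w sub);
      rewrite /= ?natrD; ring.
  rewrite EG; last by apply: (dsub _ (fun b s => 2 * (b%:R : R) + (size s)%:R * b%:R)).
  rewrite E_add // E_scale.
  rewrite hu -/sig.
  have q : p * p * E p (fun w => (size (run w sub))%:R * (res w sub)%:R) <=
           p * p * (KK * h%:R * sig) by apply: ler_wpM2l.
  nra.
- apply: (le_trans (y := E p (fun w => 2 + (w e1)%:R * (w e2)%:R *
       ((size (run w sub))%:R * (1 - (res w sub)%:R))))).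
    apply: (E_le hp0 hp1) => w; rewrite eS eZ.
    have c0 : (0 : R) <= (size (run w sub))%:R by apply: ler0n.
    case: (w e1); case: (w e2); case: (res w sub); rewrite /= ?natrD; lra.
  rewrite E_add // E_const EG; last by apply: (dsub _ (fun b s => (size s)%:R * (1 - (b%:R : R)))).
  rewrite /MM; nra.
Qed.

Lemma E_sub (f g : config n -> R) : E p (fun w => f w - g w) = E p f - E p g.
Proof.
rewrite (E_ext p (g := fun w => f w + (-1) * g w)); last by move=> w; ring.
by rewrite E_add E_scale; ring.
Qed.

Lemma incl_disj k i (e : edge n) : incl k.+1 (2 * i)%N.+1 e -> predC (incl k.+1 (2 * i)%N) e.
Proof. by rewrite /incl /= => /andP [_ /eqP ->]; rewrite negb_and; apply/orP; right; lia. Qed.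

Lemma inv_dfst h : forall k i, (k + h = n)%N -> (i < 2 ^ k)%N -> Inv (dfst n h k i) h.
Proof.
have h0 := hp0; have h1 := hp1; have h2 := hg.
have [d0 [d1 [gd [B0 [MB M0]]]]] := consts.
elim: h => [|h IH] k i hkh hi.
  rewrite /Inv /= !E_const; split; nra.
have hkh' : (k.+1 + h = n)%N by lia.
have hj1 : (2 * i < 2 ^ k.+1)%N by rewrite expnS; lia.
have hj2 : ((2 * i)%N.+1 < 2 ^ k.+1)%N by rewrite expnS; lia.
move: (child_bound hkh' hj1 (IH _ _ hkh' hj1)) => /= [a1 b1 c1 d1'].
move: (child_bound hkh' hj2 (IH _ _ hkh' hj2)) => /= [a2 b2 c2 d2'].
set t1 := chtree k.+1 (2 * i)%N (dfst n h k.+1 (2 * i)%N) in a1 b1 c1 d1' *.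
set t2 := chtree k.+1 (2 * i)%N.+1 (dfst n h k.+1 (2 * i)%N.+1) in a2 b2 c2 d2' *.
set u1 := E p (fun w => (res w t1)%:R) in a1 b1 c1.
set u2 := E p (fun w => (res w t2)%:R) in a2 b2 c2.
set A1 := E p (fun w => (size (run w t1))%:R * (res w t1)%:R) in c1.
set A2 := E p (fun w => (size (run w t2))%:R * (res w t2)%:R) in c2.
set N1 := E p (fun w => (size (run w t1))%:R * (1 - (res w t1)%:R)) in d1'.
set N2 := E p (fun w => (size (run w t2))%:R * (1 - (res w t2)%:R)) in d2'.
have eres : forall w : config n, res w (dfst n h.+1 k i) = res w t1 || res w t2.
  by move=> w; rewrite /= res_bind; case: (res w t1).
have esz : forall w : config n, size (run w (dfst n h.+1 k i)) =
    (size (run w t1) + (if res w t1 then 0 else size (run w t2)))%N.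
  by move=> w; rewrite /= run_bind size_cat; case: (res w t1) => //=; rewrite addn0.
pose D1 : pred (edge n) := incl k.+1 (2 * i)%N.
have ti1 : tree_in D1 t1 by apply: tree_in_chtree; apply: tree_in_dfst.
have ti2 : tree_in (@incl n k.+1 (2 * i)%N.+1) t2 by apply: tree_in_chtree; apply: tree_in_dfst.
have dp1 : forall (F : bool -> seq (edge n) -> R), dep (fun w => F (res w t1) (run w t1)) D1.
  by move=> F; apply: dep_tree_fun.
have dp2 : forall (F : bool -> seq (edge n) -> R), dep (fun w => F (res w t2) (run w t2)) (predC D1).
  by move=> F; apply: dep_sub (dep_tree_fun F ti2) (@incl_disj k i).
have I12 : forall F G : bool -> seq (edge n) -> R,
    E p (fun w => F (res w t1) (run w t1) * G (res w t2) (run w t2)) =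
    E p (fun w => F (res w t1) (run w t1)) * E p (fun w => G (res w t2) (run w t2)).
  by move=> F G; rewrite (indep hp0 hp1 (dp1 F) (dp2 G)).
have E1m : E p (fun w => 1 - (res w t1)%:R) = 1 - u1 by rewrite E_sub E_const.
have E2m : E p (fun w => 1 - (res w t2)%:R) = 1 - u2 by rewrite E_sub E_const.
have [r1 r2 r3] := node_arith d0 (ltW d1) M0 erefl MB (ler0n R h) a1 b1 a2 b2 c1 c2 d1' d2'.
have sv : E p (fun w => (res w (dfst n h.+1 k i))%:R) = u1 + (1 - u1) * u2.
  rewrite (E_ext p (g := fun w => (res w t1)%:R + (1 - (res w t1)%:R) * (res w t2)%:R)); last first.
    by move=> w; rewrite eres; case: (res w t1); case: (res w t2) => /=; ring.
  rewrite E_add (I12 (fun b _ => 1 - b%:R) (fun b _ => b%:R)) E1m //.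
split.
- by rewrite sv.
- rewrite sv mulrSr.
  rewrite (E_ext p (g := fun w => (size (run w t1))%:R * (res w t1)%:R +
       ((size (run w t1))%:R * (1 - (res w t1)%:R)) * (res w t2)%:R +
       (1 - (res w t1)%:R) * ((size (run w t2))%:R * (res w t2)%:R))); last first.
    move=> w; rewrite eres esz natrD.
    by case: (res w t1); case: (res w t2) => /=; ring.
  rewrite !E_add.
  rewrite (I12 (fun b s => (size s)%:R * (1 - b%:R)) (fun b _ => b%:R)).
  rewrite (I12 (fun b _ => 1 - b%:R) (fun b s => (size s)%:R * b%:R)) E1m.
  by [].
- rewrite (E_ext p (g := fun w =>
       ((size (run w t1))%:R * (1 - (res w t1)%:R)) * (1 - (res w t2)%:R) +
       (1 - (res w t1)%:R) * ((size (run w t2))%:R * (1 - (res w t2)%:R)))); last first.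
    move=> w; rewrite eres esz natrD.
    by case: (res w t1); case: (res w t2) => /=; ring.
  rewrite !E_add.
  rewrite (I12 (fun b s => (size s)%:R * (1 - b%:R)) (fun b _ => 1 - b%:R)) E2m.
  by rewrite (I12 (fun b _ => 1 - b%:R) (fun b s => (size s)%:R * (1 - b%:R))) E1m.
Qed.

End Analysis.

Unset Implicit Arguments.
Local Open Scope ring_scope.

Theorem mainTheorem7 (R : rcfType) (p : R) :
  Num.sqrt (1 / 2) < p -> p <= 1 ->
  exists c : R, forall n : nat,
    exists (A : strategy n) (T : config n -> nat),
      (forall w : config n, open_conn w -> routes_in A w (T w)) /\
      (\sum_(w : config n | `[< open_conn w >]) prob p w * (T w)%:R)
        / (\sum_(w : config n | `[< open_conn w >]) prob p w)
      <= c * n%:R.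
Proof.
move=> hs hp1.
have s0 : 0 <= Num.sqrt (1 / 2 : R) by apply: sqrtr_ge0.
have hp0 : 0 <= p by apply: le_trans s0 (ltW hs).
have ss : Num.sqrt (1 / 2 : R) * Num.sqrt (1 / 2) = 1 / 2.
  by rewrite -expr2 sqr_sqrtr // divr_ge0.
have hg : 1 / 2 < p * p by nra.
exists (KK p) => n.
exists (strat (dfst n n 0 0)), (fun w => size (run w (dfst n n 0 0))).
split.
  move=> w hw; split.
  - by move=> t ht; apply: strat_go.
  - by apply: strat_stop.
  - have hr := conn_res hw.
    have := dfs_conn (h := n) (k := 0) (i := 0) (erefl _) (erefl _) hr.
    by apply: reach_mono => e he; rewrite revealed_final.
have eqS : forall w : config n, `[< open_conn w >] = res w (dfst n n 0 0).
  by move=> w; apply/asboolP/idP => [/conn_res // | /res_conn].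
rewrite (eq_bigl _ _ eqS) (eq_bigl _ _ eqS).
have e1 : \sum_(w : config n | res w (dfst n n 0 0)) prob p w * (size (run w (dfst n n 0 0)))%:R
   = E p (fun w => (size (run w (dfst n n 0 0)))%:R * (res w (dfst n n 0 0))%:R).
  rewrite big_mkcond /E; apply: eq_bigr => w _.
  by case: (res w (dfst n n 0 0)) => /=; rewrite ?mulr1 ?mulr0.
have e2 : \sum_(w : config n | res w (dfst n n 0 0)) prob p w
   = E p (fun w => (res w (dfst n n 0 0))%:R).
  rewrite big_mkcond /E; apply: eq_bigr => w _.
  by case: (res w (dfst n n 0 0)) => /=; rewrite ?mulr1 ?mulr0.
rewrite e1 e2.
have [d0 [d1 _]] := consts hp0 hp1 hg.
have [hsig ha _] := inv_dfst hp0 hp1 hg (h := n) (k := 0) (i := 0) (erefl _) (erefl _).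
have spos : 0 < E p (fun w => (res w (dfst n n 0 0))%:R).
  apply: lt_le_trans hsig; nra.
by rewrite ler_pdivrMr.
Qed.
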